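(* Let $G=(V,E)$ be a finite, simple, connected graph, and let $\chi(G)$ denote its chromatic number. Then \[\frac{\chi(G)(\chi(G)-1)}{2} + |V| - \chi(G) = |E|\] holds if and only if $G$ is of type A or of type B.
   Context: All graphs are finite and simple (no loops, no multiple edges). Say that a graph $G$ is obtained from a graph $H$ by attaching trees if $G$ can be built from $H$ by a finite sequence (possibly empty) of steps, each of which adds one new vertex joined by an edge to exactly one already existing vertex (equivalently, $H$ is a subgraph of $G$ and the graph obtained from $G$ by deleting the edges of $H$ is a forest each of whose components contains exactly one vertex of $H$). A connected graph is of type A if it is obtained by attaching trees to a complete graph $K_n$ for some $n\ge 1$; it is of type B if it is obtained by attaching trees to an odd cycle $C_{2m+1}$ for some $m\ge 1$. The complete graph or odd cycle is called the underlying graph. *)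

(* Defs.v *)
From mathcomp Require Import all_boot.
Set Implicit Arguments. Unset Strict Implicit. Unset Printing Implicit Defensive.

Definition simple_graph (T : finType) (e : rel T) : Prop :=
  symmetric e /\ irreflexive e.

Definition connected_graph (T : finType) (e : rel T) : Prop :=
  0 < #|T| /\ forall x y : T, connect e x y.

Definition edge_set (T : finType) (e : rel T) : {set {set T}} :=
  [set [set p.1; p.2] | p in [set p : T * T | e p.1 p.2]].

Definition colorable (T : finType) (e : rel T) (k : nat) : Prop :=
  exists f : T -> 'I_k, forall x y : T, e x y -> f x != f y.

Definition is_chromatic_number (T : finType) (e : rel T) (k : nat) : Prop :=
  colorable e k /\ forall j, j < k -> ~ colorable e j.

(* G is obtained from the induced subgraph G[S] by attaching trees:
   the vertices outside S can be listed as s_0, ..., s_{m-1} (each once) so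
   that each s_i is adjacent to exactly one vertex of S ∪ {s_0,...,s_{i-1}}.
   (Then all edges of G not inside S are exactly these attaching edges.) *)
Definition attached_trees (T : finType) (e : rel T) (S : {set T}) : Prop :=
  exists s : seq T,
    [/\ uniq s,
        forall x : T, (x \in s) = (x \notin S) &
        forall i, i < size s ->
          #|[set y : T | e (nth y s i) y & (y \in S) || (y \in take i s)]| = 1].

Definition typeA (T : finType) (e : rel T) : Prop :=
  exists S : {set T},
    [/\ S != set0,
        (forall x y, x \in S -> y \in S -> x != y -> e x y) &
        attached_trees e S].

(* Type B: attaching trees to an odd cycle C_{2m+1}, m >= 1; the induced
   subgraph on the vertex set of the cycle c is exactly the cycle. *)
Definition typeB (T : finType) (e : rel T) : Prop :=
  exists c : seq T,
    [/\ uniq c, 3 <= size c, odd (size c),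
        (forall x y, x \in c -> y \in c -> e x y = (y == next c x) || (x == next c y)) &
        attached_trees e [set x in c]].

(* Main.v *)
Require Import Defs.
From mathcomp Require Import all_boot zify.
From Stdlib Require Import Classical.
Set Implicit Arguments. Unset Strict Implicit. Unset Printing Implicit Defensive.

Definition colS (T : finType) (e : rel T) (A : {set T}) (j : nat) : Prop :=
  exists f : T -> nat, (forall x, x \in A -> f x < j) /\
    (forall x y, x \in A -> y \in A -> e x y -> f x != f y).

Lemma colS_sub (T : finType) (e : rel T) (A B : {set T}) j :
  A \subset B -> colS e B j -> colS e A j.
Proof.
move=> /subsetP sAB [f [H1 H2]]; exists f; split=> [x /sAB|x y /sAB hx /sAB hy]; auto.
Qed.

Lemma colS_mon (T : finType) (e : rel T) (A : {set T}) j j' :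
  j <= j' -> colS e A j -> colS e A j'.
Proof.
move=> jj [f [H1 H2]]; exists f; split=> // x /H1 h; exact: leq_trans h jj.
Qed.

Lemma colorable_colS (T : finType) (e : rel T) j :
  colorable e j -> colS e setT j.
Proof.
move=> [f Hf]; exists (fun x => nat_of_ord (f x)); split=> // x y _ _ /Hf.
by [].
Qed.

Lemma colS_colorable (T : finType) (e : rel T) j :
  colS e setT j -> colorable e j.
Proof.
move=> [f [H1 H2]].
exists (fun x => Ordinal (H1 x (in_setT x))) => x y exy.
by rewrite -val_eqE /=; apply: H2.
Qed.

Lemma colS0 (T : finType) (e : rel T) j : colS e set0 j.
Proof. by exists (fun _ => 0); split=> [x|x y]; rewrite inE. Qed.

Lemma chi_unique (T : finType) (e : rel T) k q :
  is_chromatic_number e k -> colorable e q ->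
  (forall j, colorable e j -> q <= j) -> k = q.
Proof.
move=> [ck nk] cq hq; have kq := hq _ ck.
case: (ltngtP q k) => // qk; first by case: (nk _ qk cq).
by move: (leq_ltn_trans kq qk); rewrite ltnn.
Qed.

Lemma edgeP (T : finType) (e : rel T) E :
  reflect (exists x y, e x y /\ E = [set x; y]) (E \in edge_set e).
Proof.
apply: (iffP imsetP) => [[[x y]]|[x [y [exy ->]]]].
  by rewrite inE /= => exy ->; exists x, y.
by exists (x, y) => //; rewrite inE.
Qed.

Definition EI (T : finType) (e : rel T) (S : {set T}) :=
  edge_set e :&: [set E : {set T} | E \subset S].
Definition EO (T : finType) (e : rel T) (S : {set T}) :=
  edge_set e :\: [set E : {set T} | E \subset S].

Lemma edge_split (T : finType) (e : rel T) S :
  #|edge_set e| = #|EI e S| + #|EO e S|.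
Proof. by rewrite cardsID. Qed.

Definition TS (T : finType) (e : rel T) (S : {set T}) (s : seq T) (p : T -> T) :=
  [/\ uniq s, forall x, (x \in s) = (x \notin S) &
      forall x, x \in s -> e x (p x) /\
        (p x \in S \/ (p x \in s /\ index (p x) s < index x s))].

Lemma crossing (T : finType) (e : rel T) (S : {set T}) z w :
  z \in S -> w \notin S -> connect e z w ->
  exists y x, [/\ y \in S, x \notin S & e y x].
Proof.
move=> zS wS /connectP [q pq ew]; subst w.
elim: q z zS pq wS => [|a q IH] z zS /= => [_|/andP [eza pq]]; first by rewrite zS.
case: (boolP (a \in S)) => aS; first exact: IH pq.
by move=> _; exists z, a.
Qed.

Lemma TS_exists (T : finType) (e : rel T) :
  symmetric e -> connected_graph e ->
  forall S : {set T}, S != set0 -> exists s p, TS e S s p.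
Proof.
move=> esym [_ conn].
suff H : forall N (S : {set T}), #|~: S| <= N -> S != set0 -> exists s p, TS e S s p.
  by move=> S; apply: (H _ S (leqnn _)).
elim=> [|N IH] S hN nS.
  exists [::], id; split=> // x; rewrite in_nil.
  have : ~: S = set0 by apply/eqP; rewrite -cards_eq0 -leqn0.
  by move/setP/(_ x); rewrite !inE => ->.
case: (set_0Vmem (~: S)) => [C0|[w]].
  exists [::], id; split=> // x; rewrite in_nil.
  by move/setP: C0 => /(_ x); rewrite !inE => ->.
rewrite inE => wS.
case/set0Pn: nS => z zS.
have [y [x [yS xS eyx]]] := crossing zS wS (conn z w).
have hN' : #|~: (x |: S)| <= N.
  have : ~: (x |: S) \proper ~: S.
    rewrite properEneq setCS subsetUr andbT.
    by apply/negP => /eqP /setP /(_ x); rewrite !inE eqxx xS.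
  by move/proper_card => h; lia.
have nS' : x |: S != set0 by apply/set0Pn; exists x; rewrite !inE eqxx.
have [s [p [us ms ps]]] := IH _ hN' nS'.
have xs : x \notin s by rewrite ms !inE eqxx.
exists (x :: s), (fun v => if v == x then y else p v); split.
- by rewrite /= xs us.
- by move=> v; rewrite inE ms !inE negb_or; case: eqP => // ->; rewrite xS.
move=> v; rewrite inE => /orP [/eqP ->|vs]; first by rewrite eqxx esym eyx; split=> //; left.
have vx : (v == x) = false by apply/negbTE; apply: contraNneq xs => <-.
rewrite vx; have [epv H] := ps v vs; split=> //.
case: H => [|[pvs lt]].
  rewrite !inE => /orP [/eqP ->|]; last by left.
  right; split; first exact: mem_head.
  by rewrite /= eqxx eq_sym vx.
right; rewrite /= inE pvs orbT; split=> //.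
have px : (x == p v) = false by apply/negbTE; apply: contraNneq xs => ->.
by rewrite /= px eq_sym vx.
Qed.
Goal True. Abort.

Lemma set2_eq (T : finType) (a b c d : T) :
  [set a; b] = [set c; d] -> (a == c) || (a == d).
Proof. by move/setP/(_ a); rewrite !inE eqxx. Qed.

Definition PP (T : finType) (S : {set T}) (p : T -> T) :=
  [set [set x; p x] | x in ~: S].

Lemma TS_inj (T : finType) (e : rel T) S s p : TS e S s p ->
  {in ~: S &, injective (fun x => [set x; p x])}.
Proof.
move=> [us ms ps] x y; rewrite !inE => xS yS E.
apply/eqP/negPn/negP => xy.
have := set2_eq E; rewrite (negbTE xy) /= => /eqP xpy.
have := set2_eq (esym E); rewrite eq_sym (negbTE xy) /= => /eqP ypx.
have xs : x \in s by rewrite ms.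
have ys : y \in s by rewrite ms.
have [_ [|[_ h1]]] := ps x xs; first by rewrite -ypx (negbTE yS).
have [_ [|[_ h2]]] := ps y ys; first by rewrite -xpy (negbTE xS).
by move: h1 h2; rewrite -xpy -ypx => h1 h2; move: (ltn_trans h1 h2); rewrite ltnn.
Qed.

Lemma TS_card (T : finType) (e : rel T) S s p : TS e S s p ->
  #|PP S p| = #|~: S| /\ PP S p \subset EO e S.
Proof.
move=> hT; split; first by rewrite card_in_imset //; exact: TS_inj hT.
case: hT => [us ms ps].
apply/subsetP => E /imsetP [x]; rewrite inE => xS ->.
have xs : x \in s by rewrite ms.
rewrite !inE; apply/andP; split.
  apply/negP => /subsetP /(_ x); rewrite !inE eqxx => /(_ isT); by rewrite (negbTE xS).
by apply/edgeP; exists x, (p x); split=> //; case: (ps x xs).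
Qed.

Lemma TS_attached (T : finType) (e : rel T) S s p :
  irreflexive e -> TS e S s p -> #|EO e S| <= #|~: S| -> attached_trees e S.
Proof.
move=> eirr hT hc.
have [cP sP] := TS_card hT.
have EP : PP S p = EO e S by apply/eqP; rewrite eqEcard sP cP.
case: hT => [us ms ps].
exists s; split=> // i hi.
have x0 : T by move: hi; case: (s) => [//|a _ _]; exact: a.
set x := nth x0 s i.
apply/eqP/cards1P; exists (p x).
have xs : x \in s by exact: mem_nth.
have ix : index x s = i by exact: index_uniq.
have xS : x \notin S by rewrite -ms.
apply/setP => y; rewrite !inE (set_nth_default x0 y hi) -/x.
apply/idP/idP => [/andP [exy hy]|/eqP ->]; last first.
  have [-> [->|[h1 h2]]] := ps x xs => //=.
  by rewrite in_take // -ix h2 orbT.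
have : [set x; y] \in PP S p.
  rewrite EP !inE; apply/andP; split; last by apply/edgeP; exists x, y.
  by apply/negP => /subsetP /(_ x); rewrite !inE eqxx => /(_ isT); rewrite (negbTE xS).
case/imsetP => z; rewrite inE => zS E.
have := set2_eq (esym E); case/orP => [/eqP zx|/eqP zy].
  subst z; move/setP: E => /(_ y); rewrite !inE eqxx orbT.
  case/esym/orP => // /eqP yx.
  by rewrite yx eirr in exy.
subst z.
have := set2_eq E; case/orP => [/eqP xy|/eqP xpy].
  by rewrite xy eirr in exy.
have ys : y \in s by rewrite ms.
have ity : index y s < i.
  by case/orP: hy => [yS'|]; [rewrite yS' in zS | rewrite in_take].
have [_ [|[_ h]]] := ps y ys; first by rewrite -xpy (negbTE xS).
by move: h; rewrite -xpy ix => h'; move: (ltn_trans h' ity); rewrite ltnn.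
Qed.

Lemma attached_TS (T : finType) (e : rel T) S :
  symmetric e -> irreflexive e -> attached_trees e S ->
  exists s p, TS e S s p /\ EO e S \subset PP S p.
Proof.
move=> esy eirr [s [us ms hs]].
pose Y x := [set y | e x y & (y \in S) || (y \in take (index x s) s)].
pose p x := odflt x [pick y in Y x].
have hY : forall x, x \in s -> exists a, Y x = [set a].
  move=> x xs; have hi : index x s < size s by rewrite index_mem.
  have := hs _ hi; move/eqP/cards1P => [a Ha]; exists a.
  rewrite -Ha; apply/setP => y; rewrite !inE.
  by rewrite (set_nth_default x y hi) nth_index.
have hp : forall x, x \in s -> forall y,
    (e x y && ((y \in S) || (y \in take (index x s) s))) = (y == p x).
  move=> x xs y; have [a Ha] := hY x xs.
  rewrite /p; case: pickP => [b|]; last by move/(_ a); rewrite Ha inE eqxx.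
  rewrite Ha !inE => /eqP ->.
  by move/setP: Ha => /(_ y); rewrite !inE.
have hTS : TS e S s p.
  split=> // x xs; have := hp x xs (p x); rewrite eqxx => /andP [-> h]; split=> //.
  case/orP: h => [|h]; [by left|right].
  by split; [exact: mem_take h | rewrite -in_take // (mem_take h)].
exists s, p; split=> //.
apply/subsetP => E; rewrite !inE => /andP [nsub /edgeP [a [b [eab HE]]]]; subst E.
have key : forall u v, u \in s -> e u v -> (v \in S) || (v \in take (index u s) s) ->
    [set u; v] \in PP S p.
  move=> u v us' euv h; apply/imsetP; exists u; first by rewrite inE -ms.
  by have := hp u us' v; rewrite euv h => /esym /eqP ->.
case: (boolP (a \in S)) => aS; case: (boolP (b \in S)) => bS.
- by move: nsub; apply: contraNT => _; apply/subsetP => z; rewrite !inE => /orP [] /eqP ->.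
- by rewrite setUC; apply: key; rewrite ?ms ?aS // esy.
- by apply: key; rewrite ?ms ?bS.
have as' : a \in s by rewrite ms.
have bs : b \in s by rewrite ms.
have ab : a != b by apply: contraTneq eab => ->; rewrite eirr.
case: (ltngtP (index a s) (index b s)) => h.
- rewrite setUC; apply: key => //; first by rewrite esy.
  by rewrite in_take // h orbT.
- by apply: key => //; rewrite in_take // h orbT.
- by move: ab; rewrite -(nth_index a as') h nth_index // eqxx.
Qed.

Lemma attached_EO (T : finType) (e : rel T) S :
  symmetric e -> irreflexive e -> attached_trees e S ->
  #|EO e S| = #|~: S|.
Proof.
move=> esy eirr hA; have [s [p [hT sub]]] := attached_TS esy eirr hA.
have [cP sP] := TS_card hT.
by apply/eqP; rewrite -cP eqn_leq !subset_leq_card.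
Qed.

Definition cstep (T : finType) (p : T -> T) (f : T -> nat) (x : T) :=
  fun v => if v == x then (if f (p x) == 0 then 1 else 0) else f v.

Lemma foldl_col (T : finType) (S : {set T}) (p : T -> T) (f0 : T -> nat) (t : seq T) :
  uniq t -> (forall x, x \in t -> x \notin S) ->
  (forall x, x \in t -> p x \in S \/ (p x \in t /\ index (p x) t < index x t)) ->
  let F := foldl (cstep p) f0 t in
  [/\ forall v, v \notin t -> F v = f0 v,
      forall x, x \in t -> F x != F (p x) &
      forall x, x \in t -> F x < 2].
Proof.
elim/last_ind: t => [|t a IH] //=.
rewrite rcons_uniq => /andP [nAt ut] hS hp.
have hS' : forall x, x \in t -> x \notin S.
  by move=> x xt; apply: hS; rewrite mem_rcons inE xt orbT.
have hp' : forall x, x \in t -> p x \in S \/ (p x \in t /\ index (p x) t < index x t).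
  move=> x xt; have := hp x; rewrite mem_rcons inE xt orbT => /(_ isT).
  case=> [|[]]; first by left.
  rewrite -cats1 !index_cat xt mem_cat inE; case: ifP => pt.
    by move=> _ h; right.
  by move=> _; have := index_size x t; lia.
have [Ha Hb Hc] := IH ut hS' hp'.
rewrite foldl_rcons.
set F := foldl (cstep p) f0 t in Ha Hb Hc *.
have paS : p a \in S \/ p a \in t.
  have := hp a; rewrite mem_rcons inE eqxx => /(_ isT).
  case=> [|[]]; first by left.
  rewrite -cats1 !index_cat (negbTE nAt) mem_cat inE; case: ifP => pt; first by right.
  by move=> _; rewrite index_head; lia.
have pa_a : p a != a.
  case: paS => h; last by apply: contraTneq h => ->.
  by apply: contraTneq h => ->; apply: hS; rewrite mem_rcons mem_head.
split.
- move=> v; rewrite mem_rcons inE negb_or => /andP [va vt].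
  by rewrite /cstep (negbTE va) Ha.
- move=> x; rewrite mem_rcons inE => /orP [/eqP ->|xt].
    rewrite /cstep eqxx (negbTE pa_a); case: (F (p a) =P 0) => [->|/eqP h] //.
    by rewrite eq_sym.
  have xa : x != a by apply: contraTneq xt => ->.
  have pxa : p x != a.
    case: (hp' x xt) => [h|[h _]].
      by apply: contraTneq h => ->; apply: hS; rewrite mem_rcons mem_head.
    by apply: contraTneq h => ->.
  by rewrite /cstep (negbTE xa) (negbTE pxa); apply: Hb.
- move=> x; rewrite mem_rcons inE => /orP [/eqP ->|xt].
    by rewrite /cstep eqxx; case: ifP.
  have xa : x != a by apply: contraTneq xt => ->.
  by rewrite /cstep (negbTE xa); apply: Hc.
Qed.

Lemma col_extend (T : finType) (e : rel T) S s p j :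
  irreflexive e ->
  TS e S s p -> EO e S \subset PP S p -> colS e S j -> 2 <= j -> colS e setT j.
Proof.
move=> eirr [us ms ps] sub [f0 [H1 H2]] j2.
have hS : forall x, x \in s -> x \notin S by move=> x; rewrite ms.
have hp : forall x, x \in s -> p x \in S \/ (p x \in s /\ index (p x) s < index x s).
  by move=> x /ps [].
have [Ha Hb Hc] := foldl_col f0 us hS hp.
set F := foldl (cstep p) f0 s in Ha Hb Hc.
exists F; split=> [x _|x y _ _ exy].
  case: (boolP (x \in s)) => xs; first by apply: leq_trans (Hc x xs) j2.
  by rewrite Ha // H1 // -[x \in S]negbK -ms.
case: (boolP ([set x; y] \subset S)) => sxy.
  have xS : x \in S by apply: (subsetP sxy); rewrite !inE eqxx.
  have yS : y \in S by apply: (subsetP sxy); rewrite !inE eqxx orbT.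
  by rewrite !Ha ?ms ?xS ?yS //; apply: H2.
have : [set x; y] \in PP S p.
  by apply: (subsetP sub); rewrite !inE sxy /=; apply/edgeP; exists x, y.
case/imsetP => z; rewrite inE => zS E.
have zs : z \in s by rewrite ms.
have := set2_eq (esym E); case/orP => /eqP zE; subst z.
  have : y = p x.
    move/setP: E => /(_ y); rewrite !inE eqxx orbT => /esym /orP [/eqP yx|/eqP //].
    by rewrite yx eirr in exy.
  by move=> ->; apply: Hb.
have : x = p y.
  move/setP: E => /(_ x); rewrite !inE eqxx /= => /esym /orP [/eqP xy|/eqP //].
  by rewrite xy eirr in exy.
by move=> ->; rewrite eq_sym; apply: Hb.
Qed.

Definition NW (T : finType) (e : rel T) (W : {set T}) v := [set y in W | e v y].

Lemma handshake (T : finType) (e : rel T) (W : {set T}) :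
  symmetric e -> irreflexive e ->
  2 * #|EI e W| = \sum_(v in W) #|NW e W v|.
Proof.
move=> esy eirr.
pose D := [set q : T * T | [&& q.1 \in W, q.2 \in W & e q.1 q.2]].
have h1 : #|D| = \sum_(v in W) #|NW e W v|.
  rewrite -sum1_card (partition_big (fun q => q.1) (fun v => v \in W)); last first.
    by move=> q; rewrite inE => /and3P [].
  apply: eq_bigr => v vW.
  rewrite -[#|NW e W v|](card_in_imset (f := fun y => (v, y))); last by move=> a b _ _ [].
  rewrite -sum1_card; apply: eq_bigl => q; rewrite !inE.
  apply/idP/imsetP => [/andP [/and3P [q1 q2 eq] /eqP qv]|[y]].
    by exists q.2; [rewrite !inE q2 -qv eq | rewrite -qv; case: (q)].
  by rewrite !inE => /andP [yW evy] ->; rewrite /= vW yW evy eqxx.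
rewrite mulnC -h1 -[#|D|]sum1_card (partition_big (fun q => [set q.1; q.2]) (fun E => E \in EI e W)); last first.
  move=> q; rewrite inE => /and3P [q1 q2 eq]; rewrite !inE; apply/andP; split.
    by apply/edgeP; exists q.1, q.2.
  by apply/subsetP => z; rewrite !inE => /orP [] /eqP ->.
rewrite -sum_nat_const; apply: eq_bigr => E.
rewrite !inE => /andP [/edgeP [x [y [exy ->]]] sW].
have xy : x != y by apply: contraTneq exy => ->; rewrite eirr.
have xW : x \in W by apply: (subsetP sW); rewrite !inE eqxx.
have yW : y \in W by apply: (subsetP sW); rewrite !inE eqxx orbT.
have c2 : #|[set (x, y); (y, x)]| = 2.
  by rewrite cards2 xpair_eqE (negbTE xy).
rewrite sum1_card -c2.
apply: eq_card => -[a b]; rewrite -!topredE /= !inE /=.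
change (((a, b) \in [set (x, y); (y, x)]) = ([&& a \in W, b \in W & e a b] && ([set a; b] == [set x; y]))).
rewrite !inE !xpair_eqE.
apply/idP/idP => [|/andP [/and3P [aW bW eab] /eqP HE]]; last first.
  have aE : a \in [set x; y] by rewrite -HE !inE eqxx.
  have bE : b \in [set x; y] by rewrite -HE !inE eqxx orbT.
  have ab : a != b by apply: contraTneq eab => ->; rewrite eirr.
  move: aE bE ab; rewrite !inE.
  by case/orP => /eqP ->; case/orP => /eqP ->; rewrite ?eqxx ?orbT.
case/orP => /andP [/eqP -> /eqP ->]; rewrite ?xW ?yW ?exy ?eqxx //=.
by rewrite esy exy; apply/eqP/setUC.
Qed.

Lemma next_nthS (T : eqType) (x0 : T) (c' : seq T) x :
  x \in x0 :: c' -> next (x0 :: c') x = nth x0 (x0 :: c') (index x (x0 :: c')).+1.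
Proof. by move=> xc; rewrite next_nth xc. Qed.

Lemma nth_big (T : eqType) (x0 : T) (c' : seq T) k :
  size c' < k -> nth x0 (x0 :: c') k = x0.
Proof. by case: k => // k /= h; rewrite nth_default. Qed.

Lemma NN (T : eqType) (c : seq T) x :
  uniq c -> 3 <= size c -> x \in c -> next c (next c x) != x.
Proof.
case: c => [//|x0 c'] uc sc xc.
set c := x0 :: c' in uc sc xc *.
have sz : size c = (size c').+1 by [].
have hi : index x c < size c by rewrite index_mem.
have ex : nth x0 c (index x c) = x by rewrite nth_index.
rewrite (next_nthS xc).
have nu : forall i j, i < size c -> j < size c -> (nth x0 c i == nth x0 c j) = (i == j).
  by move=> i j hi' hj; rewrite nth_uniq.
case: (ltnP (index x c).+1 (size c)) => h1.
  have yc : nth x0 c (index x c).+1 \in c by rewrite mem_nth.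
  rewrite (next_nthS yc) index_uniq //.
  case: (ltnP (index x c).+2 (size c)) => h2.
    by rewrite -{2}ex nu //; lia.
  rewrite nth_big; last by lia.
  rewrite -ex -[X in X != _]/(nth x0 c 0) nu //; first by lia.
rewrite -/c nth_big; last by lia.
have x0c : x0 \in c by rewrite mem_head.
rewrite (next_nthS x0c) /= eqxx.
rewrite -ex -[nth x0 c' 0]/(nth x0 c 1) nu //; lia.
Qed.

Lemma odd_cycle_not2 (T : finType) (e : rel T) (c : seq T) :
  uniq c -> odd (size c) -> (forall x, x \in c -> e x (next c x)) ->
  ~ colS e [set x in c] 2.
Proof.
case: c => [//|x0 c'] uc oc he [f [H1 H2]].
set c := x0 :: c' in uc oc he H1 H2.
have sz : size c = (size c').+1 by [].
pose g i := f (nth x0 c i).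
have inc : forall i, i < size c -> nth x0 c i \in [set x in c].
  by move=> i hi; rewrite inE mem_nth.
have gl : forall i, i < size c -> g i < 2 by move=> i /inc /H1.
have step : forall i, i < size c' -> g i.+1 != g i.
  move=> i hi; rewrite /g eq_sym.
  have hi1 : i < size c by rewrite sz; apply: ltnW.
  have hi2 : i.+1 < size c by rewrite sz.
  apply: H2; [exact: inc | exact: inc |].
  have nc : nth x0 c i \in c by rewrite mem_nth.
  have := he _ nc; rewrite next_nthS // index_uniq //.
have gi : forall i, i <= size c' -> g i = if odd i then 1 - g 0 else g 0.
  elim=> [|i IH] hi //.
  have := step i hi; have := IH (ltnW hi); have := gl i.+1; have := gl i; have := gl 0.
  rewrite /= !ltnS => /(_ isT) h0 /(_ (ltnW hi)) h1 /(_ hi) h2 -> .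
  by case: (odd i) => /=; lia.
have ev : ~~ odd (size c') by move: oc; rewrite sz /=.
have := gi _ (leqnn _); rewrite (negbTE ev) => eq0.
have lc : nth x0 c (size c') \in c by rewrite mem_nth.
have := he _ lc; rewrite next_nthS // index_uniq // nth_big // => el.
have := H2 _ _ (inc _ (ltnSn _)) (inc 0 isT) el.
by move=> /negP; apply; apply/eqP; exact: eq0.
Qed.

Lemma cycle3 (T : finType) (e : rel T) (c : seq T) :
  uniq c -> 3 <= size c ->
  (forall x y, x \in c -> y \in c -> e x y -> (y == next c x) || (x == next c y)) ->
  colS e [set x in c] 3.
Proof.
case: c => [//|x0 c'] uc sc he.
set c := x0 :: c' in uc sc he *.
have sz : size c = (size c').+1 by [].
pose col x := if index x c == (size c).-1 then 2 else (odd (index x c) : nat).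
have key : forall x, x \in c -> col x != col (next c x).
  move=> x xc; have hi : index x c < size c by rewrite index_mem.
  rewrite next_nthS // -/c.
  case: (ltnP (index x c).+1 (size c)) => h1.
    rewrite /col index_uniq //.
    have -> : (index x c == (size c).-1) = false by apply/negbTE; lia.
    by case: ifP => _ /=; case: odd.
  rewrite nth_big; last by rewrite sz ltnS in h1.
  rewrite /col /= eqxx.
  have -> : (index x c == (size c).-1) = true by apply/eqP; lia.
  by have -> : (0 == (size c').+1.-1) = false by apply/negbTE; lia.
exists col; split=> [x _|x y]; first by rewrite /col; case: ifP => //; case: odd.
rewrite !inE => xc yc exy.
case/orP: (he x y xc yc exy) => /eqP ->; first exact: key.
by rewrite eq_sym; apply: key.
Qed.

Lemma cycle_EI (T : finType) (e : rel T) (c : seq T) :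
  uniq c -> 3 <= size c ->
  (forall x y, x \in c -> y \in c -> e x y = (y == next c x) || (x == next c y)) ->
  #|EI e [set x in c]| = size c.
Proof.
move=> uc sc he.
have -> : EI e [set x in c] = [set [set x; next c x] | x in [set x in c]].
  apply/setP => E; apply/idP/imsetP.
    rewrite !inE => /andP [/edgeP [x [y [exy HE]]] sub]; subst E.
    have xc : x \in c by have := subsetP sub x; rewrite !inE eqxx => /(_ isT).
    have yc : y \in c by have := subsetP sub y; rewrite !inE eqxx orbT => /(_ isT).
    move: exy; rewrite he // => /orP [] /eqP ->.
      by exists x; rewrite ?inE.
    by exists y; rewrite ?inE // setUC.
  move=> [x]; rewrite inE => xc ->; rewrite !inE; apply/andP; split.
    by apply/edgeP; exists x, (next c x); split=> //; rewrite he ?mem_next ?eqxx.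
  by apply/subsetP => z; rewrite !inE => /orP [] /eqP ->; rewrite ?mem_next.
rewrite card_in_imset.
  by rewrite cardsE; apply/card_uniqP.
move=> x y; rewrite !inE => xc yc E.
apply/eqP/negPn/negP => xy.
have := set2_eq E; rewrite (negbTE xy) /= => /eqP xny.
move/setP: E => /(_ y); rewrite !inE eqxx /= (eq_sym y x) (negbTE xy) /= => /eqP ynx.
by move: (NN uc sc xc); rewrite -ynx -xny eqxx.
Qed.

Lemma chi_pos (T : finType) (e : rel T) k :
  connected_graph e -> is_chromatic_number e k -> 0 < k.
Proof.
move=> [n0 _] [[f _] _]; case: k f => // f.
have [x _] : exists x : T, true by case/card_gt0P: n0 => x; exists x.
by case: (f x).
Qed.

Lemma col_edge2 (T : finType) (e : rel T) j x y :
  colorable e j -> e x y -> 2 <= j.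
Proof.
move=> [f hf] exy; have := hf _ _ exy; rewrite -val_eqE /=.
have := ltn_ord (f x); have := ltn_ord (f y); lia.
Qed.

Lemma col_pos (T : finType) (e : rel T) j :
  0 < #|T| -> colorable e j -> 0 < j.
Proof.
case/card_gt0P => x _ [f _].
by have := ltn_ord (f x); case: j f.
Qed.

Lemma clique_EI (T : finType) (e : rel T) (S : {set T}) :
  symmetric e -> irreflexive e ->
  (forall x y, x \in S -> y \in S -> x != y -> e x y) ->
  2 * #|EI e S| = #|S| * (#|S| - 1).
Proof.
move=> esy eirr hc; rewrite handshake //.
rewrite (eq_bigr (fun _ => #|S| - 1)) ?sum_nat_const //.
move=> v vS; rewrite (cardsD1 v S) vS add1n subSS subn0.
apply: eq_card => y; rewrite !inE.
case: (y =P v) => [->|/eqP yv] /=; first by rewrite eirr andbF.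
case: (boolP (y \in S)) => yS //=; apply: hc => //; by rewrite eq_sym.
Qed.

Lemma clique_col (T : finType) (e : rel T) (S : {set T}) j :
  irreflexive e ->
  (forall x y, x \in S -> y \in S -> x != y -> e x y) ->
  colorable e j -> #|S| <= j.
Proof.
move=> eirr hc [f hf].
have : #|[set f x | x in S]| = #|S|.
  apply: card_in_imset => x y xS yS fxy; apply/eqP/negPn/negP => xy.
  by move: (hf _ _ (hc _ _ xS yS xy)); rewrite fxy eqxx.
move=> <-; apply: leq_trans (max_card _) _; by rewrite card_ord.
Qed.

Lemma clique_colS (T : finType) (e : rel T) (S : {set T}) :
  irreflexive e -> colS e S #|S|.
Proof.
move=> eirr.
exists (fun x => index x (enum S)); split=> [x xS|x y xS yS exy].
  by rewrite cardE index_mem mem_enum.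
have xy : x != y by apply: contraTneq exy => ->; rewrite eirr.
apply: contra xy => /eqP h.
by have := congr1 (nth x (enum S)) h; rewrite !nth_index ?mem_enum // => ->.
Qed.

Lemma edge_exists (T : finType) (e : rel T) :
  0 < #|edge_set e| -> exists x y, e x y.
Proof. by case/card_gt0P => E /edgeP [x [y [exy _]]]; exists x, y. Qed.

Lemma no_edge (T : finType) (e : rel T) x y :
  #|edge_set e| = 0 -> ~~ e x y.
Proof.
move=> h; apply/negP => exy.
have hE : [set x; y] \in edge_set e by apply/edgeP; exists x, y.
have : 0 < #|edge_set e| by apply/card_gt0P; exists [set x; y].
by rewrite h.
Qed.

Lemma backA (T : finType) (e : rel T) k :
  simple_graph e -> connected_graph e -> is_chromatic_number e k -> typeA e ->
  k * (k - 1) %/ 2 + #|T| - k = #|edge_set e|.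
Proof.
move=> [esy eirr] hc hk [S [nS hcl hA]].
have hEO := attached_EO esy eirr hA.
have [s [p [hT sub]]] := attached_TS esy eirr hA.
have EI2 := clique_EI esy eirr hcl.
have cC := cardsC S.
have hq : 0 < #|S| by rewrite card_gt0.
rewrite (edge_split e S) hEO.
case: (ltnP 1 #|S|) => q2.
  have -> : k = #|S|.
    apply: chi_unique hk _ _; last by move=> j; apply: clique_col.
    apply: colS_colorable; exact: col_extend eirr hT sub (clique_colS _ eirr) q2.
  have -> : #|EI e S| = #|S| * (#|S| - 1) %/ 2 by rewrite -EI2 mulKn.
  move: (#|S| * (#|S| - 1) %/ 2) => h; lia.
have q1 : #|S| = 1 by lia.
have EI0 : #|EI e S| = 0 by move: EI2; rewrite q1; lia.
rewrite EI0.
case: (posnP #|~: S|) => n1.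
  have E0 : #|edge_set e| = 0 by rewrite (edge_split e S) hEO EI0 n1.
  have -> : k = 1.
    apply: chi_unique hk _ _; last by move=> j; apply: col_pos; case: hc.
    by exists (fun _ => ord0) => x y exy; move: (no_edge x y E0); rewrite exy.
  rewrite n1; lia.
have [x [y exy]] : exists x y, e x y.
  by apply: edge_exists; rewrite (edge_split e S) hEO EI0.
have -> : k = 2.
  apply: chi_unique hk _ _; last by move=> j hj; apply: (col_edge2 hj exy).
  apply: colS_colorable; apply: (col_extend eirr hT sub _ (leqnn 2)).
  by apply: colS_mon (clique_colS _ eirr); rewrite q1.
lia.
Qed.

Lemma backB (T : finType) (e : rel T) k :
  simple_graph e -> connected_graph e -> is_chromatic_number e k -> typeB e ->
  k * (k - 1) %/ 2 + #|T| - k = #|edge_set e|.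
Proof.
move=> [esy eirr] hc hk [c [uc sc oc hE hA]].
have hEO := attached_EO esy eirr hA.
have [s [p [hT sub]]] := attached_TS esy eirr hA.
have EIc := cycle_EI uc sc hE.
have cC := cardsC [set x in c].
have cS : #|[set x in c]| = size c by rewrite cardsE; apply/card_uniqP.
have en : forall x, x \in c -> e x (next c x) by move=> x xc; rewrite hE ?mem_next ?eqxx.
have -> : k = 3.
  apply: chi_unique hk _ _.
    apply: colS_colorable; apply: (col_extend (j := 3) eirr hT sub) => //.
    by apply: cycle3 => // x y xc yc; rewrite hE.
  move=> j hj; case: (leqP 3 j) => // j3.
  case: (odd_cycle_not2 uc oc en).
  apply: (colS_sub (subsetT _)); apply: (colS_mon _ (colorable_colS hj)); lia.
rewrite (edge_split e [set x in c]) hEO EIc.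
have -> : 3 * (3 - 1) %/ 2 = 3 by [].
lia.
Qed.

Lemma even_half k : 2 * (k * (k - 1) %/ 2) = k * (k - 1).
Proof.
rewrite mulnC divnK // dvdn2 oddM.
by case: k => [//|k]; rewrite subSS subn0 /=; case: odd.
Qed.

Lemma minimal_noncol (T : finType) (e : rel T) j (A : {set T}) :
  ~ colS e A j -> exists W : {set T},
    [/\ W \subset A, ~ colS e W j & forall B : {set T}, B \proper W -> colS e B j].
Proof.
move: {2}#|A| (leqnn #|A|) => N; elim: N A => [|N IH] A hA nA.
  exists A; split=> // B /proper_card; lia.
case: (classic (forall B : {set T}, B \proper A -> colS e B j)) => H.
  by exists A.
have [B HB] := not_all_ex_not _ _ H.
have pB : B \proper A by apply: NNPP => h; apply: HB => /h.
have nB : ~ colS e B j by move=> h; apply: HB.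
have [|W [sW nW mW]] := IH B _ nB.
  by have := proper_card pB; lia.
by exists W; split=> //; apply: subset_trans sW (proper_sub pB).
Qed.

Lemma deg_lb (T : finType) (e : rel T) j (W : {set T}) :
  symmetric e -> irreflexive e ->
  ~ colS e W j -> (forall B : {set T}, B \proper W -> colS e B j) ->
  forall v, v \in W -> j <= #|NW e W v|.
Proof.
move=> esy eirr nW mW v vW.
have pW : W :\ v \proper W by rewrite properD1.
have [f [H1 H2]] := mW _ pW.
rewrite leqNgt; apply/negP => hlt.
pose L := map f (enum (NW e W v)).
have [c cj cL] : exists2 c, c < j & c \notin L.
  case: (boolP (all (fun c => c \in L) (iota 0 j))) => hall.
    have : size (iota 0 j) <= size L.
      apply: uniq_leq_size; first exact: iota_uniq.
      by move=> z; move/allP: hall => /(_ z).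
    by rewrite size_iota size_map -cardE; lia.
  have [c] := allPn hall; rewrite mem_iota add0n => cj cL.
  by exists c.
apply: nW; exists (fun x => if x == v then c else f x); split.
  move=> x xW; case: eqP => // /eqP xv; apply: H1; by rewrite !inE xv.
have fL : forall y, y \in W -> e v y -> c != f y.
  move=> y yW evy; apply: contraNneq cL => ->.
  by apply: map_f; rewrite mem_enum !inE yW evy.
move=> x y xW yW exy.
case: (x =P v) => [xv|/eqP xv]; case: (y =P v) => [yv|/eqP yv].
- by subst; rewrite eirr in exy.
- by subst; apply: fL.
- by subst; rewrite eq_sym; apply: fL; rewrite // esy.
- by apply: H2; rewrite // !inE ?xv ?yv.
Qed.

Lemma W_big (T : finType) (e : rel T) j (W : {set T}) :
  irreflexive e -> ~ colS e W j -> j < #|W|.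
Proof.
move=> eirr nW; rewrite ltnNge; apply/negP => h.
by apply: nW; apply: colS_mon h (clique_colS _ eirr).
Qed.

Lemma W_small (T : finType) (e : rel T) j (W : {set T}) :
  symmetric e -> irreflexive e ->
  ~ colS e W j -> (forall B : {set T}, B \proper W -> colS e B j) -> j <= 1 -> #|W| = j.+1.
Proof.
move=> esy eirr nW mW j1.
have [v vW] : exists v, v \in W.
  apply/set0Pn; apply/negP => /eqP W0; by apply: nW; rewrite W0; apply: colS0.
case: j j1 nW mW => [|[|//]] _ nW mW.
  have sv : [set v] \subset W by rewrite sub1set.
  case: (boolP ([set v] \proper W)) => pv.
    by case: (mW _ pv) => f [H1 _]; move: (H1 v); rewrite inE eqxx => /(_ isT).
  have -> : W = [set v].
    by apply/eqP; rewrite eq_sym eqEproper sv pv.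
  by rewrite cards1.
have := deg_lb esy eirr nW mW vW; rewrite card_gt0 => /set0Pn [u].
rewrite !inE => /andP [uW evu].
have uv : v != u by apply: contraTneq evu => ->; rewrite eirr.
have sv : [set v; u] \subset W by apply/subsetP => z; rewrite !inE => /orP [] /eqP ->.
case: (boolP ([set v; u] \proper W)) => pv.
  case: (mW _ pv) => f [H1 H2].
  have := H2 v u; rewrite !inE !eqxx orbT => /(_ isT isT evu).
  have := H1 v; have := H1 u; rewrite !inE !eqxx orbT => /(_ isT) h1 /(_ isT) h2.
  lia.
have -> : W = [set v; u] by apply/eqP; rewrite eq_sym eqEproper sv pv.
by rewrite cards2 uv.
Qed.

Lemma path_in (T : finType) (r : rel T) (P : pred T) x p :
  (forall a b, r a b -> P b) -> path r x p -> forall y, y \in p -> P y.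
Proof.
move=> hr; elim: p x => [//|z p IH] x /= /andP [rxz pz] y.
rewrite inE => /orP [/eqP ->|]; [exact: hr rxz | move=> yp; exact: (IH _ pz y yp)].
Qed.

Lemma path_alt (T : finType) (r : rel T) (f : T -> nat) :
  (forall a b, r a b -> [/\ f a != f b, f a < 2 & f b < 2]) ->
  forall x p, path r x p -> f (last x p) = if odd (size p) then 1 - f x else f x.
Proof.
move=> hr x p; elim: p x => [//|y q IH] x /= /andP [rxy pq].
rewrite (IH _ pq); have [h1 h2 h3] := hr _ _ rxy.
by case: (odd (size q)) => /=; lia.
Qed.

Lemma sub1_lt2 u : 1 - u < 2.
Proof. lia. Qed.
Lemma flip_neq u : u < 2 -> (1 - u != u).
Proof. lia. Qed.
Lemma flip_eq u w : u < 2 -> w < 2 -> u != w -> w = 1 - u.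
Proof. lia. Qed.
Lemma flip_inj u w : u < 2 -> w < 2 -> u != w -> 1 - u != 1 - w.
Proof. lia. Qed.

Lemma cycle_from (T : finType) (e : rel T) (W : {set T}) :
  symmetric e -> irreflexive e ->
  ~ colS e W 2 -> (forall B : {set T}, B \proper W -> colS e B 2) ->
  (forall v, v \in W -> #|NW e W v| = 2) -> W != set0 ->
  exists c : seq T, [/\ uniq c, 3 <= size c, odd (size c),
    (forall x y, x \in c -> y \in c -> e x y = (y == next c x) || (x == next c y)) &
    [set x in c] = W].
Proof.
move=> esy eirr nW mW d2 /set0Pn [v vW].
have /cards2P [a [b [ab Nv]]] : #|NW e W v| == 2 by rewrite d2.
have aN : a \in NW e W v by rewrite Nv !inE eqxx.
have bN : b \in NW e W v by rewrite Nv !inE eqxx orbT.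
move: aN bN; rewrite !inE => /andP [aW eva] /andP [bW evb].
set W' := W :\ v.
have aW' : a \in W' by rewrite !inE aW andbT; apply: contraTneq eva => ->; rewrite eirr.
have bW' : b \in W' by rewrite !inE bW andbT; apply: contraTneq evb => ->; rewrite eirr.
have vW' : v \notin W' by rewrite !inE eqxx.
have claim1 : forall g : T -> nat, (forall x, x \in W' -> g x < 2) ->
    (forall x y, x \in W' -> y \in W' -> e x y -> g x != g y) -> g a != g b.
  move=> g H1 H2; apply/negP => /eqP gab; apply: nW.
  exists (fun x => if x == v then 1 - g a else g x); split.
    move=> x xW; case: eqP => [_|/eqP xv]; first exact: sub1_lt2.
    by apply: H1; rewrite !inE xv.
  have key : forall y, y \in W -> e v y -> 1 - g a != g y.
    move=> y yW evy.
    have : y \in NW e W v by rewrite !inE yW evy.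
    rewrite Nv !inE => /orP [] /eqP ->; rewrite ?gab; apply: flip_neq; exact: H1.
  move=> x y xW yW exy.
  case: (x =P v) => [xv|/eqP xv]; case: (y =P v) => [yv|/eqP yv].
  - by subst; rewrite eirr in exy.
  - by subst; apply: key.
  - by subst; rewrite eq_sym; apply: key; rewrite // esy.
  - by apply: H2; rewrite // !inE ?xv ?yv.
have [f [H1 H2]] := mW _ (properD1 vW) : colS e W' 2.
pose eW := [rel x y | [&& e x y, x \in W' & y \in W']].
have cab : connect eW a b.
  have nc' := claim1 f H1 H2.
  apply/negPn/negP => nc.
  pose g x := if connect eW a x then 1 - f x else f x.
  have gH1 : forall x, x \in W' -> g x < 2.
    by move=> x /H1; rewrite /g; case: ifP => // _ _; apply: sub1_lt2.
  have gH2 : forall x y, x \in W' -> y \in W' -> e x y -> g x != g y.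
    move=> x y xW yW exy.
    have eq : connect eW a x = connect eW a y.
      apply/idP/idP => h; apply: connect_trans h (connect1 _); rewrite /= xW yW !andbT //.
      by rewrite esy.
    have := H2 _ _ xW yW exy; have := H1 _ xW; have := H1 _ yW.
    rewrite /g eq; case: ifP => // _ h1 h2 h3; exact: flip_inj.
  have := claim1 g gH1 gH2.
  rewrite /g connect0 (negbTE nc).
  by rewrite -(flip_eq (H1 _ aW') (H1 _ bW') nc') eqxx.
case/connectP: cab => q pq lq.
move: lq; case: (shortenP pq) => p' pp' up' _ lp'.
have inW' : forall y, y \in a :: p' -> y \in W'.
  move=> y; rewrite inE => /orP [/eqP ->//|]; apply: (path_in _ pp').
  by move=> x z /= /and3P [].
have vp : v \notin a :: p' by apply/negP => /inW'; rewrite (negbTE vW').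
have pne : p' != [::] by apply: contraNneq ab => p0; rewrite lp' p0.
set c := v :: a :: p'.
have uc : uniq c by rewrite /c cons_uniq vp up'.
have sc : 3 <= size c by rewrite /c /= !ltnS lt0n size_eq0.
have oc : odd (size c).
  have h : f (last a p') = if odd (size p') then 1 - f a else f a.
    apply: (path_alt (r := eW)) pp' => x y /= /and3P [exy xW yW].
    by split; [exact: H2 | exact: H1 | exact: H1].
  have := claim1 f H1 H2.
  by rewrite lp' h /c /=; case: odd; rewrite ?eqxx.
have cyc : cycle e c.
  rewrite /c /= eva /= rcons_path -lp' esy evb andbT.
  by apply: sub_path pp' => x y /= /and3P [].
have cW : forall x, x \in c -> x \in W.
  move=> x; rewrite inE => /orP [/eqP ->//|/inW']; by rewrite inE => /andP [].
have en : forall x, x \in c -> e x (next c x) by move=> x; exact: next_cycle cyc.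
have hE : forall x y, x \in c -> y \in c -> e x y = (y == next c x) || (x == next c y).
  move=> x y xc yc; apply/idP/idP => [exy|/orP [] /eqP ->]; last 2 first.
  - exact: en.
  - by rewrite esy; apply: en.
  have npx : next c x != prev c x.
    apply: contraNneq (NN uc sc xc) => h.
    by rewrite h next_prev.
  have NE : NW e W x = [set next c x; prev c x].
    apply/eqP; rewrite eq_sym eqEcard cards2 npx d2 ?cW // andbT.
    apply/subsetP => z; rewrite !inE => /orP [] /eqP ->.
      by rewrite cW ?mem_next // en.
    by rewrite cW ?mem_prev // esy; apply: prev_cycle cyc xc.
  have : y \in NW e W x by rewrite !inE cW.
  rewrite NE !inE => /orP [->//|/eqP ->].
  by rewrite next_prev // eqxx orbT.
exists c; split=> //.
apply/eqP; rewrite eqEproper; apply/andP; split.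
  by apply/subsetP => x; rewrite inE; apply: cW.
apply/negP => /mW; exact: odd_cycle_not2 uc oc en.
Qed.

Lemma arith1 w j m o c h D : 2*m = D -> w*j <= D -> 2*h = (j.+1)*j ->
  h + (w + c) - j.+1 = m + o -> c <= o -> j.+2 <= w -> 2 <= j ->
  [/\ j = 2, o = c & D = 2 * w].
Proof.
move=> h1 h2 h3 h4 h5 h6 h7.
have j2 : j = 2.
  case: (leqP j 2) => hj; first lia.
  exfalso; nia.
subst j; split=> //; lia.
Qed.

Lemma deg_eq2 (T : finType) (W : {set T}) (d : T -> nat) :
  (forall v, v \in W -> 2 <= d v) -> \sum_(v in W) d v = 2 * #|W| ->
  forall v, v \in W -> d v = 2.
Proof.
move=> hd hs.
have : \sum_(v in W) (d v - 2) = 0.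
  rewrite sumnB // hs sum_nat_const; lia.
move/eqP; rewrite sum_nat_eq0 => /forallP h v vW.
have := h v; rewrite vW /= => /eqP; have := hd v vW; lia.
Qed.

Lemma forward (T : finType) (e : rel T) k :
  simple_graph e -> connected_graph e -> is_chromatic_number e k ->
  k * (k - 1) %/ 2 + #|T| - k = #|edge_set e| -> typeA e \/ typeB e.
Proof.
move=> [esy eirr] hc hk heq.
have k0 := chi_pos hc hk.
have [j kj] : exists j, k = j.+1 by exists k.-1; rewrite prednK.
subst k.
have nT : ~ colS e setT j by move=> h; apply: (hk.2 j (ltnSn j) (colS_colorable h)).
have [W [_ nW mW]] := minimal_noncol nT.
have nW0 : W != set0 by apply/negP => /eqP W0; apply: nW; rewrite W0; exact: colS0.
have deg := deg_lb esy eirr nW mW.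
have wj := W_big eirr nW.
have hs := handshake W esy eirr.
have sumlb : #|W| * j <= \sum_(v in W) #|NW e W v|.
  by rewrite -sum_nat_const; apply: leq_sum.
have [s [p hT]] := TS_exists esy hc nW0.
have [cP sP] := TS_card hT.
have eo : #|~: W| <= #|EO e W| by rewrite -cP subset_leq_card.
have cC := cardsC W.
have hsplit := edge_split e W.
have h2 := even_half j.+1.
rewrite subSS subn0 in h2 heq.
case: (ltngtP #|W| j.+1) => hw.
- by move: wj; rewrite ltnNge -ltnS hw.
- have j2 : 2 <= j.
    case: (leqP 2 j) => // hj.
    by move: hw; rewrite (W_small esy eirr nW mW) ?ltnn //; rewrite -ltnS.
  have heq' : (j.+1 * j) %/ 2 + (#|W| + #|~: W|) - j.+1 = #|EI e W| + #|EO e W|.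
    by rewrite cC -hsplit.
  have [jj oc D2] := arith1 hs sumlb h2 heq' eo hw j2.
  subst j.
  have at' : attached_trees e W by apply: TS_attached eirr hT _; rewrite oc.
  have d2 : forall v, v \in W -> #|NW e W v| = 2 by apply: deg_eq2.
  have [c [uc sc occ hE cW]] := cycle_from esy eirr nW mW d2 nW0.
  by right; exists c; split=> //; rewrite cW.
have hcl : forall x y, x \in W -> y \in W -> x != y -> e x y.
  move=> x y xW yW xy.
  have sub : NW e W x \subset W :\ x.
    apply/subsetP => z; rewrite !inE => /andP [zW exz]; rewrite zW andbT.
    by apply: contraTneq exz => ->; rewrite eirr.
  have : NW e W x == W :\ x.
    rewrite eqEcard sub /=.
    have : #|W| = (x \in W) + #|W :\ x| by apply: cardsD1.
    rewrite xW hw add1n => /eqP; rewrite eqSS => /eqP <-; exact: deg.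
  by move/eqP/setP/(_ y); rewrite !inE yW eq_sym xy andbT /= => ->.
left; exists W; split=> //.
have EI2 := clique_EI esy eirr hcl.
apply: (TS_attached eirr hT).
move: EI2; rewrite hw subSS subn0 -h2 => /eqP; rewrite eqn_pmul2l // => /eqP EIh.
move: heq; rewrite hsplit EIh -cC hw.
move: (j.+1 * j %/ 2) #|EO e W| #|~: W| => a b c'; lia.
Qed.

Theorem theorem1 (T : finType) (e : rel T) (chi : nat) :
  simple_graph e -> connected_graph e -> is_chromatic_number e chi ->
  (chi * (chi - 1) %/ 2 + #|T| - chi = #|edge_set e| <-> (typeA e \/ typeB e)).
Proof.
move=> hs hc hk; split; first exact: forward.
by case; [exact: backA | exact: backB].
Qed.
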